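(* Let $K$ be a field and let $T$ be a tree with $n\ge 1$ edges. Then its cut ideal $I_T$ is minimally generated by $2\cdot 4^{n-1} + 2^{n-1} - 3^n$ quadrics.
   Context: For a finite simple graph $G$ with vertex set $V(G)$ and edge set $E(G)$, an unordered partition $A|B$ of $V(G)$ (into two sets, one of which may be empty) defines the cut $Cut(A|B)$, the set of edges with one endpoint in $A$ and the other in $B$. The cut ideal $I_G$ is the kernel of the $K$-algebra homomorphism $\phi_G: K[q_{A|B} : A|B \text{ unordered partition of } V(G)] \to K[s_{ij}, t_{ij} : \{i,j\} \in E(G)]$, $q_{A|B} \mapsto \prod_{\{i,j\}\in Cut(A|B)} s_{ij} \prod_{\{i,j\}\in E(G)\setminus Cut(A|B)} t_{ij}$. For a tree with $n$ edges this polynomial ring has $2^n$ variables. *)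

(* Defs.v *)
From HB Require Import structures.
From mathcomp Require Import all_boot all_order all_algebra.
From mathcomp Require Import fingraph.
From mathcomp.multinomials Require Import mpoly.
Set Implicit Arguments. Unset Strict Implicit. Unset Printing Implicit Defensive.
Import GRing.Theory.
Local Open Scope ring_scope.

Definition is_edge (V : finType) (adj : rel V) : pred {set V} :=
  fun S => [exists i, exists j, adj i j && (S == [set i; j])].

Definition edge (V : finType) (adj : rel V) := {S : {set V} | is_edge adj S}.

Definition simple_graph (V : finType) (adj : rel V) : Prop :=
  ssrbool.symmetric adj /\ irreflexive adj.

(* A tree: a connected simple graph with #|V| - 1 edges
   (equivalently: connected and acyclic). *)
Definition is_tree (V : finType) (adj : rel V) : Prop :=
  [/\ simple_graph adj, (forall x y, connect adj x y) & (0 < #|V|)%N /\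
      #|{: edge adj}| = (#|V| - 1)%N].

(* Unordered partitions A|B of V, represented literally as the unordered
   pair {A, B} with B = V \ A (one block may be empty). *)
Definition is_upartition (V : finType) : pred {set {set V}} :=
  fun P => [exists A : {set V}, P == [set A; ~: A]].

Definition upartition (V : finType) := {P : {set {set V}} | is_upartition P}.

Definition in_cut (V : finType) (adj : rel V) (P : upartition V)
  (e : edge adj) : bool :=
  [exists i, exists j, (val e == [set i; j]) &&
     [exists A in val P, (i \in A) && (j \notin A)]].

Definition qvar (K : fieldType) (V : finType) (P : upartition V)
  : {mpoly K[#|{: upartition V}|]} := 'X_(enum_rank P).

(* Target ring K[s_ij, t_ij] : variables indexed by edge * bool,
   (e, true) = s_e and (e, false) = t_e. *)
Definition tgt_ring (K : fieldType) (V : finType) (adj : rel V) :=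
  {mpoly K[#|{: (edge adj * bool)%type}|]}.

Definition svar (K : fieldType) (V : finType) (adj : rel V) (e : edge adj)
  : tgt_ring K adj := 'X_(enum_rank (e, true)).
Definition tvar (K : fieldType) (V : finType) (adj : rel V) (e : edge adj)
  : tgt_ring K adj := 'X_(enum_rank (e, false)).

Definition cut_monomial (K : fieldType) (V : finType) (adj : rel V)
  (P : upartition V) : tgt_ring K adj :=
  (\prod_(e : edge adj | in_cut P e) @svar K V adj e) *
  (\prod_(e : edge adj | ~~ in_cut P e) @tvar K V adj e).

Definition phiG (K : fieldType) (V : finType) (adj : rel V)
  (p : {mpoly K[#|{: upartition V}|]}) : tgt_ring K adj :=
  mmap (fun c : K => c%:MP) (fun i => @cut_monomial K V adj (enum_val i)) p.

Definition cut_ideal (K : fieldType) (V : finType) (adj : rel V)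
  : pred {mpoly K[#|{: upartition V}|]} := fun p => @phiG K V adj p == 0.

Definition generates_ideal (R : comRingType) (I : pred R) (gs : seq R) : Prop :=
  forall p, I p <-> exists cs : seq R,
      size cs = size gs /\ p = \sum_(i < size gs) cs`_i * gs`_i.

(* Main.v *)
Require Import Defs.
From HB Require Import structures.
From mathcomp Require Import all_boot all_order all_algebra.
From mathcomp.multinomials Require Import mpoly.
From mathcomp Require Import fingraph.
From mathcomp Require Import zify ring.
Set Implicit Arguments. Unset Strict Implicit. Unset Printing Implicit Defensive.
Import GRing.Theory.
Local Open Scope ring_scope.

Section Graph.
Variables (V : finType) (adj : rel V).

Definition cutset (P : upartition V) : {set edge adj} := [set e | in_cut P e].

Lemma upart_ex (P : upartition V) : exists A, val P = [set A; ~: A].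
Proof. by case: P => /= P /existsP [A /eqP ->]; exists A. Qed.

Lemma in_cutE (P : upartition V) (e : edge adj) A x y :
  val P = [set A; ~: A] -> val e = [set x; y] ->
  in_cut P e = ((x \in A) != (y \in A)).
Proof.
move=> hP he; rewrite /in_cut; apply/idP/idP.
- case/existsP=> i /existsP [j /andP [/eqP eij /existsP [B /andP [BP /andP [iB jB]]]]].
  have hij : (i \in A) != (j \in A).
    move: BP; rewrite hP => /set2P [eB|eB]; rewrite eB in iB jB.
      by rewrite iB (negbTE jB).
    by move: iB jB; rewrite !inE; case: (i \in A); case: (j \in A).
  have ixy : i \in [set x; y] by rewrite -he eij set21.
  have jxy : j \in [set x; y] by rewrite -he eij set22.
  move/set2P: ixy => [ei|ei]; move/set2P: jxy => [ej|ej]; rewrite ei ej in hij.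
  + by move: hij; rewrite eqxx.
  + by [].
  + by rewrite eq_sym.
  + by move: hij; rewrite eqxx.
- case xA: (x \in A) => /= yA.
  + apply/existsP; exists x; apply/existsP; exists y; rewrite he eqxx /=.
    apply/existsP; exists A; rewrite hP set21 xA /=; by rewrite yA.
  + apply/existsP; exists x; apply/existsP; exists y; rewrite he eqxx /=.
    apply/existsP; exists (~: A); rewrite hP set22 !inE xA /=; by rewrite yA.
Qed.

Lemma is_edge2 x y : adj x y -> is_edge adj [set x; y].
Proof. by move=> axy; apply/existsP; exists x; apply/existsP; exists y; rewrite axy eqxx. Qed.

Lemma cutset_inj : (0 < #|V|)%N -> (forall x y, connect adj x y) -> injective cutset.
Proof.
move=> Vpos conn P Q eqPQ.
have [A hA] := upart_ex P; have [B hB] := upart_ex Q.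
have key x y : adj x y -> ((x \in A) != (y \in A)) = ((x \in B) != (y \in B)).
  move=> axy; pose e : edge adj := exist _ [set x; y] (is_edge2 axy).
  have := congr1 (fun S : {set edge adj} => e \in S) eqPQ; rewrite /cutset !inE.
  by rewrite (@in_cutE P e A x y hA erefl) (@in_cutE Q e B x y hB erefl).
have /card_gt0P [v0 _] := Vpos.
pose a := [pred y | (y \in A) == (y \in B)].
have cl : closed adj a.
  move=> x y axy; move: (key x y axy); rewrite !inE.
  by case: (x \in A); case: (y \in A); case: (x \in B); case: (y \in B).
have ha y : (y \in a) = (v0 \in a) by rewrite (closed_connect cl (conn v0 y)).
apply: val_inj; rewrite hA hB.
case av0: (v0 \in a).
- suff -> : A = B by [].
  by apply/setP=> y; move: (ha y); rewrite av0 inE => /eqP.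
- suff -> : A = ~: B by rewrite setCK setUC.
  apply/setP=> y; move: (ha y); rewrite av0 !inE.
  by case: (y \in A); case: (y \in B).
Qed.

Lemma card_upart_ge : (0 < #|V|)%N -> (2 ^ (#|V| - 1) <= #|{: upartition V}|)%N.
Proof.
move=> Vpos; have /card_gt0P [v0 _] := Vpos.
pose S := [set A : {set V} | v0 \in A].
have hS : (2 * #|S| = 2 ^ #|V|)%N.
  have h1 := cardC (mem S).
  have h2 : #|[predC S]| = #|S|.
    rewrite -(card_imset _ (@setC_inj V)).
    apply: eq_card => A; rewrite !inE.
    apply/idP/imsetP => [vA|[B]]; last by rewrite inE => vB ->; rewrite inE vB.
    by exists (~: A); rewrite ?setCK // inE inE.
  rewrite mul2n -addnn -{2}h2 h1.
  by rewrite -cardsT -powersetT card_powerset cardsT.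
have hle : (#|S| <= #|{: upartition V}|)%N.
  rewrite card_sig -(card_in_imset (f := fun A => [set A; ~: A])).
    apply: subset_leq_card; apply/subsetP => P /imsetP [A _ ->].
    by rewrite inE; apply/existsP; exists A.
  move=> A B; rewrite !inE => vA vB /setP eqAB.
  have := eqAB A; rewrite set21 in_set2 => /esym /orP [/eqP //|/eqP hAB].
  by move: vA; rewrite hAB inE vB.
have e : (2 ^ #|V| = 2 * 2 ^ (#|V| - 1))%N.
  by rewrite -expnS subn1 prednK.
by rewrite -(@leq_pmul2l 2) // -e -hS leq_mul2l hle orbT.
Qed.

End Graph.
Section Alg.
Variables (K : fieldType) (E : finType) (M T : nat).
Variables (c : 'I_M -> {set E}) (cidx : {set E} -> 'I_M).
Hypotheses (cK : forall C, c (cidx C) = C) (cidxK : forall i, cidx (c i) = i).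
Variable rk : E * bool -> 'I_T.
Hypothesis rk_inj : injective rk.
Variable h : 'I_M -> {mpoly K[T]}.
Hypothesis hE : forall i, h i =
  (\prod_(e in c i) 'X_(rk (e, true))) * \prod_(e in ~: c i) 'X_(rk (e, false)).

Local Notation R := {mpoly K[M]}.
Definition phi (p : R) : {mpoly K[T]} := mmap (@mpolyC T K) h p.

Definition mu (C : {set E}) : 'X_{1..T} := (\sum_(e : E) U_(rk (e, e \in C)))%MM.

Lemma hX i : h i = 'X_[mu (c i)].
Proof.
rewrite hE /mu -mprodXE.
rewrite [RHS](bigID (fun e => e \in c i)) /=; congr (_ * _).
  by apply: eq_bigr => e ->.
by apply: eq_big => [e|e]; rewrite !inE // => /negbTE ->.
Qed.

Definition w (m : 'X_{1..M}) : 'X_{1..T} := (\sum_(i < M) mu (c i) *+ m i)%MM.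

Lemma phiX m : phi 'X_[m] = 'X_[w m].
Proof.
rewrite /phi mmapX /mmap1 /w -mprodXnE; apply: eq_bigr => i _; by rewrite hX.
Qed.

Lemma phiXi i : phi 'X_i = 'X_[mu (c i)].
Proof. by rewrite /phi mmapX mmap1U hX. Qed.

Lemma phiM p q : phi (p * q) = phi p * phi q.
Proof. by rewrite /phi rmorphM. Qed.
Lemma phiB p q : phi (p - q) = phi p - phi q.
Proof. by rewrite /phi raddfB. Qed.
Lemma phiD p q : phi (p + q) = phi p + phi q.
Proof. by rewrite /phi raddfD. Qed.
Lemma phi0 : phi 0 = 0.
Proof. by rewrite /phi raddf0. Qed.
Lemma phiZ a p : phi (a *: p) = a *: phi p.
Proof. by rewrite /phi mmapZ mul_mpolyC. Qed.
Lemma phi_sum (I : Type) (r : seq I) (F : I -> R) :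
  phi (\sum_(i <- r) F i) = \sum_(i <- r) phi (F i).
Proof. by rewrite /phi raddf_sum. Qed.

Definition J (gs : seq R) (p : R) :=
  exists f : nat -> R, p = \sum_(i < size gs) f i * gs`_i.

Lemma J0 gs : J gs 0.
Proof. by exists (fun _ => 0); rewrite big1 // => i _; rewrite mul0r. Qed.

Lemma JD gs p q : J gs p -> J gs q -> J gs (p + q).
Proof.
move=> [f ->] [g ->]; exists (fun i => f i + g i).
by rewrite -big_split; apply: eq_bigr => i _; rewrite mulrDl.
Qed.

Lemma JM gs r p : J gs p -> J gs (r * p).
Proof.
move=> [f ->]; exists (fun i => r * f i).
by rewrite mulr_sumr; apply: eq_bigr => i _; rewrite mulrA.
Qed.

Lemma JN gs p : J gs p -> J gs (- p).
Proof. by move=> Jp; rewrite -mulN1r; apply: JM. Qed.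

Lemma JB gs p q : J gs p -> J gs q -> J gs (p - q).
Proof. by move=> Jp Jq; apply: JD => //; apply: JN. Qed.

Lemma JZ gs a p : J gs p -> J gs (a *: p).
Proof. by move=> Jp; rewrite -mul_mpolyC; apply: JM. Qed.

Lemma Jsum gs (I : Type) (r : seq I) (F : I -> R) :
  (forall i, J gs (F i)) -> J gs (\sum_(i <- r) F i).
Proof.
move=> HF; elim: r => [|a r IH]; first by rewrite big_nil; apply: J0.
by rewrite big_cons; apply: JD.
Qed.

Lemma Jgen gs k : (k < size gs)%N -> J gs gs`_k.
Proof.
move=> lt_k; exists (fun i => (i == k)%:R).
rewrite (bigD1 (Ordinal lt_k)) //= eqxx mul1r big1 ?addr0 // => i.
by rewrite -val_eqE /= => /negbTE ->; rewrite mul0r.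
Qed.

Lemma Jmem gs p : p \in gs -> J gs p.
Proof. by move=> pin; rewrite -(nth_index 0 pin); apply: Jgen; rewrite index_mem. Qed.

Lemma J_ker gs p : (forall g, g \in gs -> phi g = 0) -> J gs p -> phi p = 0.
Proof.
move=> Hg [f ->]; rewrite phi_sum big1 // => i _.
by rewrite phiM (Hg gs`_i) ?mulr0 //; apply: mem_nth.
Qed.

Definition quad (i j : 'I_M) : R :=
  'X_i * 'X_j - 'X_(cidx (c i :|: c j)) * 'X_(cidx (c i :&: c j)).

Lemma mu_UI A B : (mu A + mu B = mu (A :|: B) + mu (A :&: B))%MM.
Proof.
rewrite /mu -!big_split /=; apply: eq_bigr => e _; rewrite !inE.
by case: (e \in A); case: (e \in B) => //=; rewrite addmC.
Qed.

Lemma phi_quad i j : phi (quad i j) = 0.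
Proof.
by rewrite /quad phiB !phiM !phiXi !cK -!mpolyXD mu_UI subrr.
Qed.

Lemma quad_sym i j : quad i j = quad j i.
Proof. by rewrite /quad mulrC setUC setIC. Qed.

Lemma quad_sub i j : c i \subset c j -> quad i j = 0.
Proof.
move=> sij; rewrite /quad (setUidPr sij) (setIidPl sij) !cidxK.
by rewrite mulrC subrr.
Qed.

Definition incomp (A B : {set E}) := ~~ (A \subset B) && ~~ (B \subset A).

Definition pairs : seq ('I_M * 'I_M) :=
  enum [pred p : 'I_M * 'I_M | (p.1 < p.2)%N && incomp (c p.1) (c p.2)].

Definition gs : seq R := [seq quad p.1 p.2 | p <- pairs].

Lemma quad_J i j : J gs (quad i j).
Proof.
have [sij|nsij] := boolP (c i \subset c j); first by rewrite quad_sub //; apply: J0.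
have [sji|nsji] := boolP (c j \subset c i).
  by rewrite quad_sym quad_sub //; apply: J0.
have neq : i != j by apply: contraNneq nsij => ->.
case: (ltngtP i j) => [lt|gt|/val_inj eq]; last by rewrite eq eqxx in neq.
- apply: Jmem; apply/mapP; exists (i, j) => //.
  by rewrite mem_enum inE /= lt /incomp nsij nsji.
- rewrite quad_sym; apply: Jmem; apply/mapP; exists (j, i) => //.
  by rewrite mem_enum inE /= gt /incomp nsij nsji.
Qed.

Definition mono (s : seq 'I_M) : R := \prod_(i <- s) 'X_i.
Definition cnt (s : seq 'I_M) (e : E) : nat := count (fun i => e \in c i) s.
Definition chain (d : nat) (a : E -> nat) : R :=
  \prod_(j < d) 'X_(cidx [set e | (j < a e)%N]).

Lemma L1 t a : exists b t', [/\ size t' = size t,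
   J gs (mono (a :: t) - 'X_b * mono t'),
   forall e, cnt (a :: t) e = ((e \in c b) + cnt t' e)%N &
   c b = [set e | (0 < cnt (a :: t) e)%N]].
Proof.
elim: t a => [|a' t IH] a.
  exists a, [::]; split.
  - by [].
  - by rewrite /mono !big_cons !big_nil mulr1 subrr; apply: J0.
  - by [].
  - by apply/setP => e; rewrite inE /cnt /= addn0 lt0b.
have [b0 [t0 [sz Jm hc hb]]] := IH a'.
exists (cidx (c a :|: c b0)), (cidx (c a :&: c b0) :: t0); split.
- by rewrite /= sz.
- have -> : mono [:: a, a' & t] -
      'X_(cidx (c a :|: c b0)) * mono (cidx (c a :&: c b0) :: t0) =
    'X_a * (mono (a' :: t) - 'X_b0 * mono t0) + mono t0 * quad a b0.
    rewrite /mono !big_cons /quad; ring.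
  by apply: JD; apply: JM => //; apply: quad_J.
- move=> e; have := hc e; rewrite /cnt /= !cK !inE => ->.
  by case: (e \in c a); case: (e \in c b0) => /=; lia.
- apply/setP => e; rewrite cK !inE.
  have hbe : (e \in c b0) = (0 < cnt (a' :: t) e)%N by rewrite hb inE.
  rewrite hbe /cnt /=; by case: (e \in c a).
Qed.

Lemma L2 s : J gs (mono s - chain (size s) (cnt s)).
Proof.
have [d hsz] : exists d, size s = d by exists (size s).
rewrite hsz; elim: d s hsz => [|d IH] s hsz.
- case: s hsz => // _.
  by rewrite /mono /chain big_nil big_ord0 subrr; apply: J0.
- case: s hsz => [//|a t] hsz.
  have [b [t' [sz Jm hc hb]]] := L1 t a.
  have IH' := IH t' (etrans sz (eq_add_S _ _ hsz)).
  have -> : chain d.+1 (cnt (a :: t)) = 'X_b * chain d (cnt t').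
    rewrite /chain big_ord_recl; congr (_ * _).
      by rewrite -hb cidxK.
    apply: eq_bigr => j _; congr 'X_(cidx _); apply/setP => e; rewrite !inE lift0.
    have hbe : (e \in c b) = (0 < cnt (a :: t) e)%N by rewrite hb inE.
    move: (hc e) hbe; case: (e \in c b) => /= h1 h2; rewrite h1.
      by rewrite add1n ltnS.
    by move: h2; rewrite h1; lia.
  have -> : mono (a :: t) - 'X_b * chain d (cnt t') =
      (mono (a :: t) - 'X_b * mono t') + 'X_b * (mono t' - chain d (cnt t')).
    by ring.
  by apply: JD => //; apply: JM.
Qed.

Lemma wD m1 m2 : w (m1 + m2)%MM = (w m1 + w m2)%MM.
Proof.
apply/mnmP => k; rewrite mnmDE /w !mnm_sumE -big_split; apply: eq_bigr => i _.
by rewrite !mulmnE mnmDE mulnDr.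
Qed.

Lemma w0 : w 0%MM = 0%MM.
Proof.
by apply/mnmP => k; rewrite /w mnm_sumE mnm0E big1 // => i _; rewrite mulmnE mnm0E muln0.
Qed.

Lemma wU j : w U_(j)%MM = mu (c j).
Proof.
apply/mnmP => k; rewrite /w mnm_sumE (bigD1 j) //= mulmnE mnm1E eqxx muln1.
by rewrite big1 ?addn0 // => i /negbTE ne; rewrite mulmnE mnm1E eq_sym ne muln0.
Qed.

Lemma w_sum s : w (\sum_(i <- s) U_(i))%MM = (\sum_(i <- s) mu (c i))%MM.
Proof. by elim: s => [|a s IH]; rewrite ?big_nil ?w0 // !big_cons wD wU IH. Qed.

Lemma mdeg_mu C : mdeg (mu C) = #|E|.
Proof. by rewrite /mu mdeg_sum (eq_bigr (fun _ => 1%N)) ?sum1_card // => e _; rewrite mdeg1. Qed.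

Lemma mu_true C e : mu C (rk (e, true)) = (e \in C).
Proof.
rewrite /mu mnm_sumE (bigD1 e) //= mnm1E (inj_eq rk_inj) xpair_eqE eqxx /= eqb_id.
rewrite big1 ?addn0 // => e' /negbTE ne.
by rewrite mnm1E (inj_eq rk_inj) xpair_eqE ne.
Qed.

Hypothesis En : (0 < #|E|)%N.

Definition F (u : 'X_{1..T}) : R := chain (mdeg u %/ #|E|) (fun e => u (rk (e, true))).

Lemma chain_ext d a a' : a =1 a' -> chain d a = chain d a'.
Proof.
move=> eqa; rewrite /chain; apply: eq_bigr => j _; congr 'X_(cidx _).
by apply/setP => e; rewrite !inE eqa.
Qed.

Lemma F_s s : F (w (\sum_(i <- s) U_(i))%MM) = chain (size s) (cnt s).
Proof.
rewrite /F w_sum mdeg_sum (eq_bigr (fun _ => #|E|)); last by move=> i _; rewrite mdeg_mu.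
rewrite big_const_seq count_predT iter_addn_0 mulnC mulnK //.
apply: chain_ext => e; rewrite mnm_sumE.
elim: s => [|a s IH]; first by rewrite big_nil.
by rewrite big_cons mu_true IH.
Qed.

Lemma mon_ex m : exists s : seq 'I_M, m = (\sum_(i <- s) U_(i))%MM.
Proof.
move: {2}(mdeg m) (erefl (mdeg m)) => d; elim: d m => [|d IH] m hd.
  by exists [::]; rewrite big_nil; apply/eqP; rewrite -mdeg_eq0 hd.
case: (pickP (fun i => m i != 0%N)) => [i hi|h0]; last first.
  move: hd; rewrite mdegE big1 // => i _; by apply/eqP; rewrite -[_ == _]negbK h0.
have le : (U_(i) <= m)%MM by rewrite lep1mP.
have hd' : mdeg (m - U_(i))%MM = d.
  by move: hd; rewrite -{1}(submK le) mdegD mdeg1 addn1 => /eq_add_S.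
have [s hs] := IH _ hd'.
by exists (i :: s); rewrite big_cons -hs addmC submK.
Qed.

Lemma mono_X s : mono s = 'X_[\sum_(i <- s) U_(i)].
Proof. by rewrite /mono mprodXE. Qed.

Lemma X_F m : J gs ('X_[m] - F (w m)).
Proof. by have [s ->] := mon_ex m; rewrite F_s -mono_X; apply: L2. Qed.

Lemma phiE p : phi p = \sum_(m <- msupp p) p@_m *: 'X_[w m].
Proof. rewrite {1}[p]mpolyE phi_sum. by under eq_bigr => m _ do rewrite phiZ phiX. Qed.

Lemma coef_phi p u : (phi p)@_u = \sum_(m <- msupp p | w m == u) p@_m.
Proof.
rewrite phiE raddf_sum /= [RHS]big_mkcond /=; apply: eq_bigr => m _.
by rewrite mcoeffZ mcoeffX; case: eqP => _; rewrite ?mulr1 ?mulr0.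
Qed.

Lemma regroup (r : seq 'X_{1..M}) (G : 'X_{1..M} -> K) :
  \sum_(m <- r) G m *: F (w m) =
  \sum_(u <- undup (map w r)) (\sum_(m <- r | w m == u) G m) *: F u.
Proof.
symmetry.
rewrite (eq_bigr (fun u => \sum_(m <- r) if w m == u then G m *: F (w m) else 0)); last first.
  move=> u _; rewrite scaler_suml big_mkcond; apply: eq_bigr => m _.
  by case: eqP => [->|_] //; rewrite scale0r.
rewrite exchange_big /=; apply: eq_big_seq => m mr.
rewrite (bigD1_seq (w m) _ (undup_uniq _)); last by rewrite mem_undup; apply: map_f.
have -> : (w m == w m) = true by apply/eqP.
rewrite big1 => [|u ne]; first exact: addr0.
by rewrite (negbTE (_ : w m != u)) // eq_sym.
Qed.

Lemma ker_J p : phi p = 0 -> J gs p.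
Proof.
move=> hp.
have e1 : p = \sum_(m <- msupp p) p@_m *: ('X_[m] - F (w m)) +
              \sum_(m <- msupp p) p@_m *: F (w m).
  by rewrite -big_split /= {1}[p]mpolyE; apply: eq_bigr => m _; rewrite scalerBr subrK.
have e2 : \sum_(m <- msupp p) p@_m *: F (w m) = 0.
  rewrite regroup big1 // => u _; by rewrite -coef_phi hp mcoeff0 scale0r.
rewrite e1 e2 addr0; apply: Jsum => m; apply: JZ; exact: X_F.
Qed.

Lemma mdeg_w m : mdeg (w m) = (mdeg m * #|E|)%N.
Proof.
rewrite /w mdeg_sum mdegE big_distrl /=; apply: eq_bigr => i _.
by rewrite mdegMn mdeg_mu mulnC.
Qed.

Lemma mu_inj : injective mu.
Proof.
move=> A B eqAB; apply/setP => e.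
have := congr1 (fun m : 'X_{1..T} => m (rk (e, true))) eqAB; rewrite /= !mu_true.
by case: (e \in A); case: (e \in B).
Qed.

Lemma w_low m m0 : (mdeg m0 <= 1)%N -> w m = w m0 -> m = m0.
Proof.
move=> le eq.
have hd : mdeg m = mdeg m0.
  by move: (congr1 mdeg eq); rewrite !mdeg_w => /eqP; rewrite eqn_pmul2r // => /eqP.
move: le; rewrite leq_eqVlt ltnS leqn0 => /orP [d1|/eqP d0].
- have /mdeg1P [i /eqP ei] := d1.
  have /mdeg1P [j /eqP ej] : mdeg m == 1%N by rewrite hd.
  move: eq; rewrite ei ej !wU => /mu_inj /(congr1 cidx); rewrite !cidxK => ->.
  by [].
- have z1 : m = 0%MM by apply/eqP; rewrite -mdeg_eq0 hd d0.
  have z2 : m0 = 0%MM by apply/eqP; rewrite -mdeg_eq0 d0.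
  by rewrite z1 z2.
Qed.

Lemma ker_low p : phi p = 0 -> forall m0, (mdeg m0 <= 1)%N -> p@_m0 = 0.
Proof.
move=> hp m0 le; have := congr1 (mcoeff (w m0)) hp; rewrite coef_phi mcoeff0.
rewrite (eq_bigl (pred1 m0)) => [|m]; last first.
  by rewrite /=; apply/eqP/eqP => [/(w_low le)|->].
have [min|nin] := boolP (m0 \in msupp p); last by rewrite memN_msupp_eq0.
by rewrite -big_filter filter_pred1_uniq ?msupp_uniq // big_seq1.
Qed.

Lemma coefM2 (a q : R) (m : 'X_{1..M}) : (forall m0, (mdeg m0 <= 1)%N -> q@_m0 = 0) ->
  mdeg m = 2%N -> (a * q)@_m = a@_0%MM * q@_m.
Proof.
move=> hq hm.
rewrite {1}(_ : a = (a@_0%MM)%:MP + (a - (a@_0%MM)%:MP)); last by rewrite addrC subrK.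
rewrite mulrDl mcoeffD mcoeffCM.
suff -> : ((a - (a@_0%MM)%:MP) * q)@_m = 0 by rewrite addr0.
set a' := a - (a@_0%MM)%:MP.
have a'0 : a'@_0%MM = 0 by rewrite mcoeffB mcoeffC eqxx mulr1 subrr.
apply/eqP; rewrite mcoeff_eq0; apply/negP => /msuppM_le /allpairsP [[m1 m2] [/= m1in m2in em]].
move: hm; rewrite em mdegD.
have h1 : (0 < mdeg m1)%N.
  rewrite lt0n mdeg_eq0; apply: contraTneq m1in => ->.
  by rewrite mcoeff_msupp a'0 eqxx.
have h2 : (1 < mdeg m2)%N.
  rewrite ltnNge; apply: contraTN m2in => le.
  by rewrite mcoeff_msupp hq // eqxx.
lia.
Qed.

Lemma U2inj a b a2 b2 : (U_(a) + U_(b))%MM = (U_(a2) + U_(b2))%MM :> 'X_{1..M} ->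
  (a = a2 /\ b = b2) \/ (a = b2 /\ b = a2).
Proof.
move=> eq; have := congr1 (fun m : 'X_{1..M} => m a) eq; rewrite !mnmDE !mnm1E eqxx.
case: (a2 =P a) => [e2|ne2].
  left; split => //; rewrite -e2 in eq; move/addmI: eq => /eqP.
  by rewrite eq_mnm1 => /eqP.
case: (b2 =P a) => [e3|ne3] //= _.
right; split => //; rewrite -e3 [RHS]addmC in eq; move/addmI: eq => /eqP.
by rewrite eq_mnm1 => /eqP.
Qed.

Definition mq (p : 'I_M * 'I_M) : 'X_{1..M} := (U_(p.1) + U_(p.2))%MM.

Lemma mdeg_mq p : mdeg (mq p) = 2%N.
Proof. by rewrite /mq mdegD !mdeg1. Qed.

Lemma quad_coef p q : p \in pairs -> q \in pairs ->
  (quad p.1 p.2)@_(mq q) = (p == q)%:R.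
Proof.
rewrite !mem_enum !inE => /andP [lp ip] /andP [lq /andP [iq1 iq2]].
rewrite /quad /mq -!mpolyXD mcoeffB !mcoeffX.
have -> : ((U_(p.1) + U_(p.2))%MM == (U_(q.1) + U_(q.2))%MM) = (p == q).
  apply/eqP/eqP => [/U2inj [[e1 e2]|[e1 e2]]|->] //.
    by case: p q e1 e2 {lp ip iq1 iq2 lq} => ? ? [? ?] /= -> ->.
  by move: lp lq; rewrite e1 e2 => l1 l2; have := ltn_trans l1 l2; rewrite ltnn.
have -> : ((U_(cidx (c p.1 :|: c p.2)) + U_(cidx (c p.1 :&: c p.2)))%MM ==
           (U_(q.1) + U_(q.2))%MM) = false.
  apply/negP => /eqP /U2inj [[e1 e2]|[e1 e2]].
  - move: iq2; rewrite -e1 -e2 !cK; by rewrite (subset_trans (subsetIl _ _) (subsetUl _ _)).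
  - move: iq1; rewrite -e1 -e2 !cK; by rewrite (subset_trans (subsetIl _ _) (subsetUl _ _)).
by rewrite subr0.
Qed.

Lemma lower (hs : seq R) : (forall p, phi p = 0 -> J hs p) ->
  (forall x, x \in hs -> phi x = 0) -> (size pairs <= size hs)%N.
Proof.
move=> hJ hker.
pose pt := in_tuple pairs.
have hq (k : 'I_(size pairs)) : J hs (quad (tnth pt k).1 (tnth pt k).2).
  by apply: hJ; apply: phi_quad.
have [f hf] := fin_all_exists hq.
pose A := \matrix_(k < size pairs, i < size hs) (f k i)@_0%MM.
pose B := \matrix_(i < size hs, l < size pairs) (hs`_i)@_(mq (tnth pt l)).
have AB : A *m B = 1%:M.
  apply/matrixP => k l; rewrite !mxE.
  rewrite (eq_bigr (fun i : 'I_(size hs) => (f k i * hs`_i)@_(mq (tnth pt l)))); last first.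
    move=> i _; rewrite !mxE coefM2 ?mdeg_mq //; apply: ker_low; apply: hker.
    exact: mem_nth.
  rewrite -raddf_sum /= -(hf k) quad_coef ?mem_tnth //.
  have tinj : injective (tnth pt) by apply/tuple_uniqP; apply: enum_uniq.
  by rewrite (inj_eq tinj).
have := mxrankM_maxr A B; rewrite AB mxrank1 => le.
exact: leq_trans le (rank_leq_row B).
Qed.

End Alg.

Section Count.
Variables (E : finType) (M : nat).
Variables (c : 'I_M -> {set E}) (cidx : {set E} -> 'I_M).
Hypotheses (cK : forall C, c (cidx C) = C) (cidxK : forall i, cidx (c i) = i).

Lemma cardM : M = (2 ^ #|E|)%N.
Proof.
have bij : bijective c by exists cidx.
rewrite -{1}(card_ord M) (bij_eq_card bij).
by rewrite -cardsT -powersetT card_powerset cardsT.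
Qed.

Definition swp (p : 'I_M * 'I_M) := (p.2, p.1).
Lemma swpK : involutive swp. Proof. by case. Qed.

Lemma card_swap (P : pred ('I_M * 'I_M)) : #|[pred p | P (swp p)]| = #|P|.
Proof.
rewrite -(card_imset (mem P) (inv_inj swpK)); apply: eq_card => p.
rewrite !inE; apply/idP/imsetP => [Pp|[q Pq ->]]; last by rewrite swpK.
by exists (swp p); rewrite ?swpK.
Qed.

Definition gf (f : {ffun E -> option bool}) : 'I_M * 'I_M :=
  (cidx [set e | f e == Some true], cidx [set e | f e != None]).

Lemma gf_inj : injective gf.
Proof.
move=> f1 f2 [/(congr1 c) e1 /(congr1 c) e2]; rewrite !cK in e1 e2.
apply/ffunP => e; move/setP/(_ e): e1; move/setP/(_ e): e2; rewrite !inE.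
by case: (f1 e) => [[]|]; case: (f2 e) => [[]|].
Qed.

Lemma card_sub : #|[pred p : 'I_M * 'I_M | c p.1 \subset c p.2]| = (3 ^ #|E|)%N.
Proof.
have -> : (3 ^ #|E| = #|{ffun E -> option bool}|)%N by rewrite card_ffun card_option card_bool.
rewrite -cardsT -(card_imset _ gf_inj); apply: eq_card => p; rewrite !inE.
apply/idP/imsetP => [sub|[f _ ->]]; last first.
  rewrite /gf /= !cK; apply/subsetP => e; rewrite !inE => /eqP ->; by [].
case: p sub => p1 p2 /= sub.
pose f := [ffun e => if e \in c p1 then Some true else if e \in c p2 then Some false else None].
exists f; rewrite ?inE //.
rewrite /gf; congr (_, _).
  rewrite -[LHS]cidxK; congr cidx; apply/esym; apply/setP => e; rewrite !inE ffunE.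
  by case: (e \in c p1); case: (e \in c p2).
rewrite -[LHS]cidxK; congr cidx; apply/esym; apply/setP => e; rewrite !inE ffunE.
case e1: (e \in c p1); last by case: (e \in c p2).
by rewrite (subsetP sub _ e1).
Qed.

Lemma card_diag :
  #|[pred p : 'I_M * 'I_M | (c p.1 \subset c p.2) && (c p.2 \subset c p.1)]| = M.
Proof.
have dinj : injective (fun i : 'I_M => (i, i)) by move=> i j [].
transitivity #|'I_M|; last exact: card_ord.
rewrite -cardsT -(card_imset _ dinj); apply: eq_card => p.
rewrite !inE -eqEsubset; apply/idP/imsetP => [/eqP e|[i _ ->]] //.
exists p.1 => //; case: p e => p1 p2 /= /(congr1 cidx); rewrite !cidxK => ->.
by [].
Qed.

Lemma card_pairs (hE : (0 < #|E|)%N) :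
  size (pairs c) = (2 * 4 ^ #|E|.-1 + 2 ^ #|E|.-1 - 3 ^ #|E|)%N.
Proof.
rewrite /pairs -cardE.
set P1 := [pred p : 'I_M * 'I_M | (p.1 < p.2)%N && incomp (c p.1) (c p.2)].
pose I := [pred p : 'I_M * 'I_M | incomp (c p.1) (c p.2)].
have h1 : (#|P1| + #|P1| = #|I|)%N.
  rewrite -(cardID [pred p : 'I_M * 'I_M | (p.1 < p.2)%N] I); congr (_ + _).
    by apply: eq_card => p; rewrite !inE andbC.
  rewrite -(card_swap P1); apply: eq_card => -[p1 p2]; rewrite !inE /swp /=.
  rewrite /incomp; case: (ltngtP p1 p2) => //= [|e]; first by rewrite andbC.
  by rewrite (val_inj e) subxx.
have h2 : (#|I| + #|[pred p : 'I_M * 'I_M | (c p.1 \subset c p.2) || (c p.2 \subset c p.1)]| = M * M)%N.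
  have -> : (M * M = #|{: 'I_M * 'I_M}|)%N by rewrite card_prod card_ord.
  rewrite -(cardC I); congr (_ + _).
  by apply: eq_card => p; rewrite !inE /incomp negb_and !negbK.
have h3 := cardUI [pred p : 'I_M * 'I_M | c p.1 \subset c p.2]
                  [pred p : 'I_M * 'I_M | c p.2 \subset c p.1].
have e3 : #|[pred p : 'I_M * 'I_M | c p.2 \subset c p.1]| = (3 ^ #|E|)%N.
  by rewrite -card_sub -card_swap.
rewrite card_sub e3 in h3.
have e4 : #|[predU [pred p : 'I_M * 'I_M | c p.1 \subset c p.2] &
                   [pred p : 'I_M * 'I_M | c p.2 \subset c p.1]]| =
          #|[pred p : 'I_M * 'I_M | (c p.1 \subset c p.2) || (c p.2 \subset c p.1)]|.
  by apply: eq_card.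
have e5 : #|[predI [pred p : 'I_M * 'I_M | c p.1 \subset c p.2] &
                   [pred p : 'I_M * 'I_M | c p.2 \subset c p.1]]| = M.
  by etransitivity; last exact: card_diag; apply: eq_card.
rewrite e4 e5 in h3.
have h2' : (#|I| + #|[pred p : 'I_M * 'I_M | (c p.1 \subset c p.2) || (c p.2 \subset c p.1)]| = 4 ^ #|E|)%N.
  by rewrite h2 cardM -expnMn.
have h3' : (#|[pred p : 'I_M * 'I_M | (c p.1 \subset c p.2) || (c p.2 \subset c p.1)]| + 2 ^ #|E| = 3 ^ #|E| + 3 ^ #|E|)%N.
  by rewrite -cardM.
move: h1 h2' h3'.
move: #|P1| #|I| #|[pred p : 'I_M * 'I_M | (c p.1 \subset c p.2) || (c p.2 \subset c p.1)]| => x y z.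
case: #|E| hE => // k _ /=.
rewrite !expnS.
lia.
Qed.

End Count.


Lemma gen_J (K : fieldType) (n : nat) (gs : seq {mpoly K[n]}) p :
  (exists cs : seq {mpoly K[n]}, size cs = size gs /\
     p = \sum_(i < size gs) cs`_i * gs`_i) <-> J gs p.
Proof.
split => [[cs [_ ->]]|[f ->]]; first by exists (nth 0 cs).
exists (mkseq f (size gs)); split; first exact: size_mkseq.
by apply: eq_bigr => i _; rewrite nth_mkseq.
Qed.

Theorem corollary4p2 (K : fieldType) (V : finType) (adj : rel V) :
  is_tree adj -> (1 <= #|{: edge adj}|)%N ->
  let n := #|{: edge adj}| in
  let N := (2 * 4 ^ n.-1 + 2 ^ n.-1 - 3 ^ n)%N in
  (exists gs : seq {mpoly K[#|{: upartition V}|]},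
      [/\ size gs = N, all (fun g => g \is 2.-homog) gs &
          generates_ideal (@cut_ideal K V adj) gs]) /\
  (forall gs : seq {mpoly K[#|{: upartition V}|]},
      generates_ideal (@cut_ideal K V adj) gs -> (N <= size gs)%N).
Proof.
move=> [[_ _] conn [Vpos ecard]] n1 n N.
have inj := cutset_inj (adj := adj) Vpos conn.
have bij : bijective (@cutset V adj).
  apply: inj_card_bij => //.
  rewrite -cardsT -powersetT card_powerset cardsT ecard.
  exact: card_upart_ge.
case: bij => g cutK gK.
pose c (i : 'I_#|{: upartition V}|) := cutset adj (enum_val i).
pose cidx (C : {set edge adj}) := enum_rank (g C).
have cK C : c (cidx C) = C by rewrite /c /cidx enum_rankK gK.
have cidxK i : cidx (c i) = i by rewrite /c /cidx cutK enum_valK.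
pose rk : edge adj * bool -> _ := enum_rank.
have rk_inj : injective rk := @enum_rank_inj _.
pose h := fun i : 'I_#|{: upartition V}| => @cut_monomial K V adj (enum_val i).
have hE i : h i = (\prod_(e in c i) 'X_(rk (e, true))) *
                  \prod_(e in ~: c i) 'X_(rk (e, false)).
  rewrite /h /cut_monomial; congr (_ * _); apply: eq_bigl => e; by rewrite !inE.
have En : (0 < #|{: edge adj}|)%N by [].
have phiGE p : phiG adj p = phi h p by [].
split.
- exists (gs K c cidx); split.
  + by rewrite size_map (card_pairs cK cidxK En).
  + apply/allP => q /mapP [p _ ->]; rewrite /quad -!mpolyXD.
    by rewrite rpredB // dhomogX /= mdegD !mdeg1.
  + move=> p; rewrite gen_J /cut_ideal phiGE; split.
      by move/eqP; apply: (ker_J cK cidxK rk_inj hE En).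
    move=> Jp; apply/eqP; apply: J_ker Jp => q /mapP [pq _ ->].
    exact: (phi_quad cK hE).
- move=> hs gen; rewrite /N -(card_pairs cK cidxK En).
  apply: (lower cK cidxK rk_inj hE En).
    by move=> p hp; apply/gen_J/gen; rewrite /cut_ideal phiGE hp.
  move=> x xin; rewrite -(nth_index 0 xin).
  have := gen (hs`_(index x hs)); rewrite /cut_ideal phiGE => [[_ /(_ _)]].
  move=> H; apply/eqP; apply: H; apply/gen_J; apply: Jgen; by rewrite index_mem.
Qed.
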